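(* Let $X$ be a complete nonsingular toric variety which is Fano and all of whose toric subvarieties are Fano, with fan $\Delta$. Let $\langle\rho'_1,\ldots,\rho'_k\rangle$ be a cone of $\Delta$ and let $w=a_1\rho'_1+\cdots+a_k\rho'_k$ with integers $a_i\ge1$ for each $i$ and $a_1\ge2$. If $\{\rho_1,\ldots,\rho_j\}$ is any linearly independent set of ray generators of $\Delta$, then $\rho_1+\cdots+\rho_j\neq w$.
   Context: Ray generators are the primitive lattice generators of the rays of $\Delta$. *)

(* Defs.v *)
From HB Require Import structures.
From mathcomp Require Import all_boot all_order all_algebra.
Set Implicit Arguments. Unset Strict Implicit. Unset Printing Implicit Defensive.
Import Order.TTheory GRing.Theory Num.Theory.
Local Open Scope ring_scope.

Section Fan.
Variables (n : nat) (I : finType) (ray : I -> 'rV[int]_n) (D : {set {set I}}).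

Definition rayq (i : I) : 'rV[rat]_n := map_mx intr (ray i).

Definition pair (m : 'cV[rat]_n) (i : I) : rat := (rayq i *m m) 0 0.

Definition in_cone (S : {set I}) (v : 'rV[rat]_n) : Prop :=
  exists c : I -> rat, (forall i, i \in S -> 0 <= c i) /\
                        v = \sum_(i in S) c i *: rayq i.

Definition unimodular_cone (S : {set I}) : Prop :=
  exists (B : 'M[int]_n) (f : I -> 'I_n),
    B \in unitmx /\ {in S &, injective f} /\ (forall i, i \in S -> row (f i) B = ray i).

Definition complete_smooth_fan : Prop :=
  [/\ injective ray /\ (forall i, [set i] \in D),
      (forall S T : {set I}, S \in D -> T \subset S -> T \in D),
      (forall (S T : {set I}) v, S \in D -> T \in D -> in_cone S v -> in_cone T v ->
                     in_cone (S :&: T) v),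
      (forall S, S \in D -> unimodular_cone S) &
      (forall v : 'rV[rat]_n, exists2 S, S \in D & in_cone S v)].

Definition maximal_cone (S : {set I}) : bool :=
  (S \in D) && [forall T : {set I}, (T \in D) && (S \subset T) ==> (T == S)].

(* Fano condition for the orbit closure V(tau), stated on its fan Star(tau) in
   N / N_tau: for every maximal cone sigma containing tau, there is a linear
   functional on N_Q vanishing on tau (i.e. one on (N/N_tau)_Q) which is 1 on
   the rays of sigma \ tau and < 1 on every other ray of Star(tau).  This is
   strict convexity of the support function of -K_{V(tau)}. *)
Definition star_fano (tau : {set I}) : Prop :=
  forall sigma, maximal_cone sigma -> tau \subset sigma ->
    exists m : 'cV[rat]_n,
      [/\ (forall i, i \in tau -> pair m i = 0),
          (forall i, i \in sigma :\: tau -> pair m i = 1) &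
          (forall j, j \notin sigma -> (j |: tau) \in D -> pair m j < 1)].

Definition fano : Prop := star_fano set0.

Definition all_toric_subvarieties_fano : Prop :=
  forall tau, tau \in D -> star_fano tau.

Definition lin_indep (S : {set I}) : Prop :=
  forall c : I -> rat, \sum_(i in S) c i *: rayq i = 0 -> forall i, i \in S -> c i = 0.

End Fan.

(* Main.v *)
Require Import Defs.
From mathcomp Require Import all_boot all_order all_algebra.
From mathcomp Require Import ring lra zify.
From Stdlib Require Import Classical.
Set Implicit Arguments. Unset Strict Implicit. Unset Printing Implicit Defensive.
Import Order.TTheory GRing.Theory Num.Theory.
Local Open Scope ring_scope.

Lemma setUD1 (I : finType) x (P tau : {set I}) : x \in P -> (P :\ x) :|: (x |: tau) = P :|: tau.
Proof.
move=> xP; apply/setP => z; rewrite !inE.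
by case: (eqVneq z x) => [->|_]; rewrite ?xP ?orbT.
Qed.

Lemma setD1D1U (I : finType) x x' (P tau : {set I}) : x \in P -> x' != x ->
  ((P :\ x) :\ x') :|: (x |: tau) = (P :\ x') :|: tau.
Proof.
move=> xP x'x; apply/setP => z; rewrite !inE.
case: (eqVneq z x) => [->|_]; rewrite ?xP ?orbT ?(eq_sym x x') ?x'x //=.
Qed.

Lemma disjP (I : finType) (A B : {set I}) :
  (forall z, z \in A -> z \in B -> False) -> [disjoint A & B].
Proof.
move=> h; rewrite -setI_eq0; apply/eqP/setP => z; rewrite !inE.
by apply/negP => /andP[a b]; exact: h z a b.
Qed.

Lemma grp (V : zmodType) (a b L : V) : a + (b + - a + L) - b = L.
Proof. by rewrite !addrA (addrC a b) addrK (addrC b L) addrK. Qed.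

Section Fan.
Variables (n : nat) (I : finType) (ray : I -> 'rV[int]_n) (D : {set {set I}}).
Hypothesis hfan : complete_smooth_fan ray D.
Hypothesis hsub : all_toric_subvarieties_fano ray D.

Local Notation rq := (rayq ray).
Implicit Types (A B S T U V tau P Q s : {set I}).

Definition lc (A : {set I}) (c : I -> rat) : 'rV[rat]_n := \sum_(i in A) c i *: rq i.

Lemma Dsub (S T : {set I}) : S \in D -> T \subset S -> T \in D.
Proof. by case: hfan => _ H _ _ _; apply: H. Qed.

Lemma Dsing i : [set i] \in D.
Proof. by case: hfan => [[_ H] _ _ _ _]. Qed.

Lemma Dinter (S T : {set I}) v : S \in D -> T \in D -> in_cone ray S v -> in_cone ray T v ->
  in_cone ray (S :&: T) v.
Proof. by case: hfan => _ _ H _ _; apply: H. Qed.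

Lemma Dcompl v : exists2 S, S \in D & in_cone ray S v.
Proof. by case: hfan => _ _ _ _ H; apply: H. Qed.

Lemma lc_sub (A U : {set I}) c : A \subset U -> lc A c = lc U (fun i => if i \in A then c i else 0).
Proof.
move=> sAU; rewrite /lc [in RHS](big_setID A) /= (setIidPr sAU).
rewrite [X in _ = _ + X]big1 ?addr0; last first.
  by move=> i /setDP [_ niA]; rewrite (negbTE niA) scale0r.
by apply: eq_bigr => i iA; rewrite iA.
Qed.

Lemma lcD A c d : lc A c + lc A d = lc A (fun i => c i + d i).
Proof. by rewrite /lc -big_split; apply: eq_bigr => i _; rewrite scalerDl. Qed.

Lemma lcB A c d : lc A c - lc A d = lc A (fun i => c i - d i).
Proof. by rewrite /lc -sumrB; apply: eq_bigr => i _; rewrite scalerBl. Qed.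

Lemma lcZ A a c : a *: lc A c = lc A (fun i => a * c i).
Proof. by rewrite /lc scaler_sumr; apply: eq_bigr => i _; rewrite scalerA. Qed.

Lemma lc0 A : lc A (fun=> 0) = 0.
Proof. by rewrite /lc big1 // => i _; rewrite scale0r. Qed.

Lemma lc_set0 c : lc set0 c = 0.
Proof. by rewrite /lc big_set0. Qed.

Lemma lcU1 a (A : {set I}) c : a \notin A -> lc (a |: A) c = c a *: rq a + lc A c.
Proof. by move=> naA; rewrite /lc big_setU1. Qed.

Lemma lcU (A B : {set I}) c : [disjoint A & B] -> lc (A :|: B) c = lc A c + lc B c.
Proof.
move=> dAB; rewrite /lc -bigU //; apply: eq_bigl => i; by rewrite !inE.
Qed.

Lemma lc_ext A c d : (forall i, i \in A -> c i = d i) -> lc A c = lc A d.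
Proof. by move=> h; apply: eq_bigr => i iA; rewrite h. Qed.

Lemma indep_eq U c d : lin_indep ray U -> lc U c = lc U d ->
  forall i, i \in U -> c i = d i.
Proof.
move=> hU e i iU; apply/eqP; rewrite -subr_eq0; apply/eqP.
apply: (hU (fun i => c i - d i)) => //.
by rewrite -/(lc U _) -lcB e subrr.
Qed.

Lemma indep_sub (U V : {set I}) : lin_indep ray U -> V \subset U -> lin_indep ray V.
Proof.
move=> hU sVU c hc i iV.
have := hU (fun i => if i \in V then c i else 0).
rewrite -/(lc U _) -lc_sub // => /(_ hc i (subsetP sVU i iV)).
by rewrite iV.
Qed.

Lemma dualD A : A \in D -> exists e : I -> 'cV[int]_n,
  forall i j, i \in A -> j \in A -> (ray j *m e i) 0 0 = (j == i)%:R.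
Proof.
case: hfan => _ _ _ hU _ hA.
have [B [f [Bu [finj frow]]]] := hU A hA.
exists (fun i => col (f i) (invmx B)) => i j iA jA.
rewrite -(frow j jA).
have -> : (row (f j) B *m col (f i) (invmx B)) 0 0 = (B *m invmx B) (f j) (f i).
  by rewrite !mxE; apply: eq_bigr => k _; rewrite !mxE.
by rewrite mulmxV // mxE (inj_in_eq finj).
Qed.

Lemma rq_dual j (e : 'cV[int]_n) : (rq j *m map_mx intr e) 0 0 = ((ray j *m e) 0 0)%:~R.
Proof. by rewrite /rayq -map_mxM mxE. Qed.

Lemma coefD A : A \in D -> exists e : I -> 'cV[int]_n,
  forall i c, i \in A -> (lc A c *m map_mx intr (e i)) 0 0 = c i.
Proof.
move=> hA; have [e he] := dualD hA; exists e => i c iA.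
rewrite /lc mulmx_suml summxE (bigD1 i) //= big1 => [|j /andP[jA ji]].
  by rewrite addr0 -scalemxAl mxE rq_dual he // eqxx mulr1.
by rewrite -scalemxAl mxE rq_dual he // (negbTE ji) mulr0.
Qed.

Lemma indepD A : A \in D -> lin_indep ray A.
Proof.
move=> hA c hc i iA; have [e he] := coefD hA.
by rewrite -(he i c iA) /lc hc mul0mx mxE.
Qed.

Lemma intD A (v : 'rV[int]_n) c : A \in D -> lc A c = map_mx intr v ->
  forall i, i \in A -> exists k : int, c i = k%:~R.
Proof.
move=> hA hv i iA; have [e he] := coefD hA.
exists ((v *m e i) 0 0); by rewrite -(he i c iA) hv -map_mxM mxE.
Qed.

Definition pv (m : 'cV[rat]_n) (v : 'rV[rat]_n) : rat := (v *m m) 0 0.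

Lemma pv_lc m A c : pv m (lc A c) = \sum_(i in A) c i * pair ray m i.
Proof.
rewrite /pv /lc mulmx_suml summxE; apply: eq_bigr => i _.
by rewrite -scalemxAl mxE.
Qed.

Lemma pvD m u w : pv m (u + w) = pv m u + pv m w.
Proof. by rewrite /pv mulmxDl mxE. Qed.

Lemma pvZ m a u : pv m (a *: u) = a * pv m u.
Proof. by rewrite /pv -scalemxAl mxE. Qed.

Lemma pvN m u : pv m (- u) = - pv m u.
Proof. by rewrite /pv mulNmx mxE. Qed.

Lemma pv_rq m i : pv m (rq i) = pair ray m i.
Proof. by []. Qed.

Lemma ext_max s : s \in D -> exists2 s', maximal_cone D s' & s \subset s'.
Proof.
move=> sD.
pose P := [pred T : {set I} | (T \in D) && (s \subset T)].
have Ps : P s by rewrite /P /= sD subxx.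
case: (arg_maxnP (fun T => #|T|) Ps) => T /andP[TD sT] Tmax.
exists T => //; rewrite /maximal_cone TD /=.
apply/forallP => T'; apply/implyP => /andP[T'D TT'].
by rewrite eq_sym eqEcard TT' /=; apply: Tmax; rewrite /P /= T'D (subset_trans sT TT').
Qed.

Lemma RC tau v : tau \in D -> exists s c, [/\ maximal_cone D s, tau \subset s,
  forall u, u \in s -> u \notin tau -> 0 <= c u & v = lc s c].
Proof.
move=> htau.
pose t := lc tau (fun=> 1).
pose q (l : rat) := v + l *: t.
have key A : A \in D -> (exists l, in_cone ray A (q l) /\ tau \subset A) \/
    exists N, forall l, N <= l -> ~ in_cone ray A (q l).
  move=> AD.
  case: (classic (exists N, forall l, N <= l -> ~ in_cone ray A (q l))) => [h|h];
    [by right|left].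
  have hinf : forall N, exists l, N <= l /\ in_cone ray A (q l).
    move=> N; apply: NNPP => hn; apply: h; exists N => l hl hc; apply: hn.
    by exists l.
  have [l1 [_ [c1 [c1p e1]]]] := hinf 0.
  have [l2 [hl2 [c2 [c2p e2]]]] := hinf (l1 + 1).
  set d := l2 - l1.
  have d0 : 0 < d by rewrite /d; lra.
  pose b i := (c2 i - c1 i) / d.
  have hb : lc A b = t.
    have hq : lc A (fun i => c2 i - c1 i) = d *: t.
      rewrite -lcB /lc -e1 -e2 /q /d opprD addrACA subrr add0r -scalerBl.
      by [].
    have -> : t = d^-1 *: (d *: t) by rewrite scalerA mulVf ?scale1r // gt_eqF.
    by rewrite -hq lcZ; apply: lc_ext => i _; rewrite mulrC.
  case: (boolP [exists i in A, b i < 0]) => [/exists_inP [i iA bi] | hne].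
    set N := l2 + c2 i / (- b i) + 1.
    have [l3 [hl3 [c3 [c3p e3]]]] := hinf N.
    have : lc A c3 = lc A (fun j => c2 j + (l3 - l2) * b j).
      rewrite -lcD -lcZ hb /lc -e3 -e2 /q -addrA -scalerDl [l2 + _]addrC subrK.
      by [].
    move/(indep_eq (indepD AD))/(_ i iA) => h3.
    have := c3p i iA; rewrite h3.
    have hB : 0 < - b i by rewrite oppr_gt0.
    have h1 : c2 i / (- b i) + 1 <= l3 - l2 by move: hl3; rewrite /N; lra.
    have h2 : (c2 i / (- b i) + 1) * (- b i) <= (l3 - l2) * (- b i) by rewrite ler_pM2r.
    rewrite mulrDl divfK ?gt_eqF // mul1r mulrN in h2.
    move: h2; set X := (l3 - l2) * b i; lra.
  have bp : forall i, i \in A -> 0 <= b i.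
    move=> i iA; rewrite leNgt; apply/negP => bi; move/negP: hne; apply.
    by apply/exists_inP; exists i.
  exists l1; split; first by exists c1.
  have ht1 : in_cone ray A t by exists b; split => //; rewrite -hb.
  have ht2 : in_cone ray tau t by exists (fun=> 1); split => // _ _; exact: ler01.
  have [d' [d'p ed']] := Dinter AD htau ht1 ht2.
  apply/subsetP => z zt.
  have e : lc tau (fun=> 1) = lc tau (fun i => if i \in A :&: tau then d' i else 0).
    by rewrite -lc_sub ?subsetIr // -ed'.
  have := indep_eq (indepD htau) e zt.
  by case: ifP => [/setIP[] // | _] /eqP; rewrite oner_eq0.
suff [A [AD [l [[c [c0 qc]] tA]]]] : exists A, A \in D /\ exists l,
    in_cone ray A (q l) /\ tau \subset A.
  have [s smax As] := ext_max AD.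
  exists s, (fun i => (if i \in A then c i else 0) - l * (if i \in tau then 1 else 0)).
  split => //.
  - exact: subset_trans tA As.
  - move=> u us ut; rewrite (negbTE ut) mulr0 subr0; case: ifP => // uA.
    exact: c0.
  - have -> : v = q l - l *: t by rewrite /q addrK.
    rewrite qc -/(lc A c) (lc_sub _ As) /t (lc_sub _ (subset_trans tA As)) lcZ lcB.
    by [].
apply: NNPP => hno.
have bnds : forall A, A \in D -> exists N, forall l, N <= l -> ~ in_cone ray A (q l).
  move=> A AD; case: (key A AD) => // hl; case: hno; exists A; split => //.
have [N hN] : exists N, forall A, A \in D -> forall l, N <= l -> ~ in_cone ray A (q l).
  have : forall s : seq {set I}, (forall A, A \in s -> A \in D) ->
      exists N, forall A, A \in s -> forall l, N <= l -> ~ in_cone ray A (q l).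
    elim => [|A s IH] hs; first by exists 0.
    have hs' : forall B, B \in s -> B \in D by move=> B Bs; apply: hs; rewrite inE Bs orbT.
    have [N1 h1] := IH hs'.
    have [N2 h2] := bnds A (hs A (mem_head _ _)).
    exists (Num.max N1 N2) => B; rewrite inE => /orP[BA | Bs] l hl.
      rewrite (eqP BA).
      by apply: h2; apply: le_trans hl; rewrite le_max lexx orbT.
    by apply: h1 => //; apply: le_trans hl; rewrite le_max lexx.
  move/(_ (enum D)) => [].
    by move=> A; rewrite mem_enum.
  by move=> N hN; exists N => A AD; apply: hN; rewrite mem_enum.
have [A AD hA] := Dcompl (q N).
exact: hN A AD N (lexx N) hA.
Qed.

Lemma sum_one U (c : I -> rat) : (forall u, u \in U -> 0 <= c u) ->
  (forall u, u \in U -> exists k : int, c u = k%:~R) ->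
  1 <= \sum_(u in U) c u -> \sum_(u in U) c u < 2 ->
  exists2 u0, u0 \in U & forall u, u \in U -> c u = (u == u0)%:R.
Proof.
move=> c0 ci s1 s2.
have [u0 u0U cu0] : exists2 u0, u0 \in U & c u0 != 0.
  case: (boolP [exists u in U, c u != 0]) => [/exists_inP [u uU cu] | /exists_inPn hz].
    by exists u.
  have : \sum_(u in U) c u = 0.
    by apply: big1 => u uU; apply/eqP; move: (hz u uU); rewrite negbK.
  move=> h; rewrite h in s1; lra.
have le0 : c u0 <= \sum_(u in U) c u.
  rewrite (big_setD1 u0) //= lerDl; apply: sumr_ge0 => i.
  by rewrite !inE => /andP[_ iU]; exact: c0.
have rest : forall u, u \in U -> u != u0 -> c u0 + c u <= \sum_(u in U) c u.
  move=> u uU uu0; rewrite (big_setD1 u0) //= (big_setD1 u) ?inE ?uu0 ?uU //=.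
  have : 0 <= \sum_(i in (U :\ u0) :\ u) c i.
    by apply: sumr_ge0 => i; rewrite !inE => /and3P[_ _ iU]; exact: c0.
  lra.
exists u0 => // u uU; case: (eqVneq u u0) => [->|uu0].
  have [k hk] := ci u0 u0U; rewrite hk.
  have h2 : (k%:~R : rat) < (2 : int)%:~R by rewrite -hk; apply: le_lt_trans s2.
  move: cu0 (c0 u0 u0U) h2; rewrite hk intr_eq0 ler0z ltr_int => ??? .
  have -> : k = 1 by lia.
  by [].
have := rest u uU uu0; have := c0 u uU; have [k hk] := ci u uU; rewrite hk.
have [k0 hk0] := ci u0 u0U; rewrite hk0 in cu0 le0 s2 *.
move: cu0; rewrite intr_eq0 => k0n.
move=> kp hs.
have : ((k0 + k)%:~R : rat) < (2 : int)%:~R by rewrite intrD; exact: le_lt_trans hs s2.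
rewrite ltr_int => h; move: kp; rewrite ler0z => kp.
have := c0 u0 u0U; rewrite hk0 ler0z => k00.
have -> : k = 0 by lia.
by [].
Qed.

Lemma sum_lt_card P (f : I -> rat) x0 : x0 \in P -> (forall x, x \in P -> f x <= 1) ->
  f x0 < 1 -> \sum_(x in P) f x < #|P|%:R.
Proof.
move=> x0P f1 fx0; rewrite (big_setD1 x0) //= (cardsD1 x0 P) x0P add1n -addn1 natrD.
have : \sum_(x in P :\ x0) f x <= #|P :\ x0|%:R.
  rewrite -sumr_const; apply: ler_sum => i; rewrite !inE => /andP[_ iP]; exact: f1.
lra.
Qed.

Lemma lc_split tau s c : tau \subset s -> lc s c = lc tau c + lc (s :\: tau) c.
Proof. by move=> ts; rewrite /lc (big_setID tau) /= (setIidPr ts). Qed.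

Lemma lcD1 x P c : x \in P -> lc P c = c x *: rq x + lc (P :\ x) c.
Proof. by move=> xP; rewrite /lc (big_setD1 x). Qed.

Lemma notspan P tau h : lin_indep ray (P :|: tau) -> [disjoint P & tau] -> P != set0 ->
  lc P (fun=> 1) <> lc tau h.
Proof.
move=> hi dPt /set0Pn [x xP] e.
have e' : lc (P :|: tau) (fun i => if i \in P then 1 else 0) =
          lc (P :|: tau) (fun i => if i \in tau then h i else 0).
  by rewrite -!lc_sub ?subsetUl ?subsetUr.
have := indep_eq hi e' (i:=x); rewrite inE xP => /(_ isT).
by rewrite (disjointFr dPt xP) => /eqP; rewrite oner_eq0.
Qed.

Lemma lc1_map A : lc A (fun=> 1) = map_mx intr (\sum_(i in A) ray i).
Proof.
rewrite /lc (map_mx_sum (GRing.Additive.clone _ _ intr _)).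
by apply: eq_bigr => i _; rewrite scale1r.
Qed.

Lemma mle1 tau s (m : 'cV[rat]_n) j :
  (forall i, i \in s :\: tau -> pair ray m i = 1) ->
  (forall j, j \notin s -> j |: tau \in D -> pair ray m j < 1) ->
  j |: tau \in D -> j \notin tau -> pair ray m j <= 1.
Proof.
move=> m1 mlt jD jt; case: (boolP (j \in s)) => js.
  by rewrite m1 // inE jt js.
exact: ltW (mlt j js jD).
Qed.

Lemma setup tau P : tau \in D -> P != set0 -> [disjoint P & tau] -> lin_indep ray (P :|: tau) ->
  exists s m c, [/\ (s \in D /\ tau \subset s),
    (forall i, i \in tau -> pair ray m i = 0),
    (forall i, i \in s :\: tau -> pair ray m i = 1),
    (forall j, j \notin s -> j |: tau \in D -> pair ray m j < 1) &
    [/\ lc P (fun=>1) = lc s c, forall u, u \in s -> u \notin tau -> 0 <= c u,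
        forall u, u \in s -> exists k : int, c u = k%:~R,
        pv m (lc P (fun=>1)) = \sum_(u in s :\: tau) c u &
        1 <= pv m (lc P (fun=>1))]].
Proof.
move=> htau P0 dPt iPt.
have [s [c [smax ts c0 ev]]] := RC (lc P (fun=>1)) htau.
have [m [m0 m1 mlt]] := hsub htau smax ts.
have sD : s \in D by case/andP: smax.
have ci : forall u, u \in s -> exists k : int, c u = k%:~R.
  by move=> u us; apply: (intD sD _ us); rewrite -ev lc1_map.
have pvE : pv m (lc P (fun=>1)) = \sum_(u in s :\: tau) c u.
  rewrite ev (lc_split c ts) pvD !pv_lc big1 ?add0r => [|i it]; last by rewrite m0 // mulr0.
  by apply: eq_bigr => i iS; rewrite m1 // mulr1.
exists s, m, c; split => //; split => //.
rewrite pvE.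
have [u0 u0s cu0] : exists2 u0, u0 \in s :\: tau & c u0 != 0.
  case: (boolP [exists u in s :\: tau, c u != 0]) => [/exists_inP [u uU cu] | /exists_inPn hz].
    by exists u.
  exfalso; apply: (notspan (h:=c) iPt dPt P0).
  rewrite ev (lc_split c ts) [X in _ + X](_ : _ = 0) ?addr0 //.
  rewrite /lc big1 // => u uU; move: (hz u uU); rewrite negbK => /eqP->.
  by rewrite scale0r.
have u0s' := u0s; move: u0s' => /setDP [u0S u0t].
have ge1 : 1 <= c u0.
  have [k hk] := ci u0 u0S; rewrite hk ler1z.
  move: cu0 (c0 u0 u0S u0t); rewrite hk intr_eq0 ler0z => ??; lia.
rewrite (big_setD1 u0) //=.
have : 0 <= \sum_(i in (s :\: tau) :\ u0) c i.
  apply: sumr_ge0 => i; rewrite !inE => /andP[_ /andP[it iS]]; exact: c0.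
lra.
Qed.

Lemma Gsetup tau P : (1 < #|P|)%N -> tau \in D -> [disjoint P & tau] ->
  lin_indep ray (P :|: tau) -> P :|: tau \notin D ->
  (forall x, x \in P -> (P :\ x) :|: tau \in D) ->
  exists s m c, [/\ [/\ s \in D, tau \subset s,
    (forall i, i \in tau -> pair ray m i = 0),
    (forall i, i \in s :\: tau -> pair ray m i = 1) &
    (forall j, j \notin s -> j |: tau \in D -> pair ray m j < 1)],
    [/\ lc P (fun=>1) = lc s c, forall u, u \in s -> u \notin tau -> 0 <= c u,
        forall u, u \in s -> exists k : int, c u = k%:~R,
        pv m (lc P (fun=>1)) = \sum_(u in s :\: tau) c u &
        1 <= pv m (lc P (fun=>1))],
    (forall x, x \in P -> x \notin tau /\ x |: tau \in D),
    (forall x, x \in P -> pair ray m x <= 1) &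
    [/\ exists2 x0, x0 \in P & x0 \notin s &
      pv m (lc P (fun=>1)) = \sum_(x in P) pair ray m x]].
Proof.
move=> cP htau dPt iPt nPt hPx.
have P0 : P != set0 by rewrite -card_gt0; apply: ltn_trans cP.
have [s [m [c [[sD ts] m0 m1 mlt [ev c0 ci pvE pv1]]]]] := setup htau P0 dPt iPt.
have xt : forall x, x \in P -> x \notin tau by move=> x xP; rewrite (disjointFr dPt xP).
have adj : forall x, x \in P -> x |: tau \in D.
  move=> x xP; have := cardsD1 x P; rewrite xP => hc.
  have : (0 < #|P :\ x|)%N by lia.
  rewrite card_gt0 => /set0Pn [x' /setD1P [x'x x'P]].
  apply: (Dsub (hPx x' x'P)); apply/subsetP => z.
  by rewrite !inE => /orP[/eqP -> | ->]; [rewrite eq_sym x'x xP | rewrite orbT].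
exists s, m, c; split => //.
- by move=> x xP; split; [exact: xt | exact: adj].
- by move=> x xP; apply: (mle1 m1 mlt (adj x xP) (xt x xP)).
split.
- case: (boolP (P \subset s)) => [Ps | /subsetPn [x0 x0P x0s]]; last by exists x0.
  by case/negP: nPt; apply: Dsub sD _; rewrite subUset Ps ts.
- by rewrite pv_lc; apply: eq_bigr => x _; rewrite mul1r.
Qed.

Lemma G k : forall tau P, #|P| = k.+2 -> tau \in D -> [disjoint P & tau] ->
  lin_indep ray (P :|: tau) -> P :|: tau \notin D ->
  (forall x, x \in P -> (P :\ x) :|: tau \in D) ->
  exists y, [/\ y \notin tau, y |: tau \in D &
                exists h, lc P (fun=>1) - rq y = lc tau h].
Proof.
elim: k => [|k IH] tau P cP htau dPt iPt nPt hPx;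
  (have cP1 : (1 < #|P|)%N by rewrite cP);
  have [s [m [c [[sD ts m0 m1 mlt] [ev c0 ci pvE pv1] adj mle [[x0 x0P x0s] pvP]]]]]
    := Gsetup cP1 htau dPt iPt nPt hPx.
- have lt2 : \sum_(u in s :\: tau) c u < 2.
    rewrite -pvE pvP; have := sum_lt_card x0P mle (mlt x0 x0s (adj x0 x0P).2).
    by rewrite cP.
  have c0' : forall u, u \in s :\: tau -> 0 <= c u by move=> u /setDP [us ut]; exact: c0.
  have ci' : forall u, u \in s :\: tau -> exists k : int, c u = k%:~R.
    by move=> u /setDP [us ut]; exact: ci.
  rewrite pvE in pv1.
  have [u0 u0U hu] := sum_one c0' ci' pv1 lt2.
  move: (u0U) => /setDP [u0s u0t].
  exists u0; split => //.
    by apply: Dsub sD _; rewrite subUset sub1set u0s ts.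
  exists c; rewrite ev (lc_split c ts).
  have -> : lc (s :\: tau) c = rq u0.
    rewrite (lc_ext hu) (lcD1 _ u0U) eqxx scale1r (lc_ext (d := fun=> 0)) ?lc0 ?addr0 //.
    by move=> i /setD1P [iu0 _]; rewrite (negbTE iu0).
  by rewrite addrK.
- have hx : forall x, x \in P -> (exists y, [/\ y \notin tau, y |: tau \in D &
                exists h, lc P (fun=>1) - rq y = lc tau h]) \/ pair ray m x <= 0.
    move=> x xP.
    have [xnt xD] := adj x xP.
    have cPx : #|P :\ x| = k.+2 by have := cardsD1 x P; rewrite xP cP add1n => -[].
    have dx : [disjoint P :\ x & x |: tau].
      apply: disjP => z; rewrite !inE => /andP[zx zP] /orP[zx' | zt].
        by rewrite zx' in zx.
      by rewrite (disjointFr dPt zP) in zt.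
    have eU : (P :\ x) :|: (x |: tau) = P :|: tau := setUD1 _ xP.
    have hPx' : forall x', x' \in P :\ x -> ((P :\ x) :\ x') :|: (x |: tau) \in D.
      by move=> x' /setD1P [x'x x'P]; rewrite setD1D1U //; exact: hPx.
    have iPt' : lin_indep ray ((P :\ x) :|: (x |: tau)) by rewrite eU.
    have nPt' : (P :\ x) :|: (x |: tau) \notin D by rewrite eU.
    have [y [yt yD [h eh]]] := IH (x |: tau) (P :\ x) cPx xD dx iPt' nPt' hPx'.
    move: yt; rewrite !inE negb_or => /andP[yx yt].
    set A := y |: (x |: tau).
    have R : lc (P :\ x) (fun=>1) = rq y + h x *: rq x + lc tau h.
      by rewrite -addrA -lcU1 // -eh addrC subrK.
    have ytau : forall i, i \in tau -> (i == y) = false.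
      by move=> i it; apply/negP => /eqP iy; rewrite -iy it in yt.
    have xtau : forall i, i \in tau -> (i == x) = false.
      by move=> i it; apply/negP => /eqP ix; rewrite -ix it in xnt.
    have xy : (x == y) = false by rewrite eq_sym (negbTE yx).
    have [kx hkx] : exists kx : int, h x = kx%:~R.
      pose h' := fun i => if i == y then 1 else h i.
      have eA : lc A h' = map_mx intr (\sum_(i in P :\ x) ray i).
        rewrite -lc1_map R /A lcU1 ?inE ?negb_or ?yx ?yt // lcU1 // /h' eqxx scale1r xy.
        by rewrite (lc_ext (d := h)) ?addrA // => i it; rewrite ytau.
      have := intD yD eA (i := x); rewrite /A !inE eqxx orbT => /(_ isT) [kx].
      by rewrite /h' xy => ->; exists kx.
    have neg : kx < 0.
      rewrite ltNge; apply/negP => kx0.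
      have hx0 : 0 <= h x by rewrite hkx ler0z.
      set lam := \sum_(z in tau) `|h z|.
      have lam0 : 0 <= lam by apply: sumr_ge0 => z _; exact: normr_ge0.
      have lamz : forall z, z \in tau -> 0 <= lam + h z.
        move=> z zt; have : `|h z| <= lam.
          by rewrite /lam (big_setD1 z) //= lerDl sumr_ge0 // => i _; exact: normr_ge0.
        have := ler_norm (- h z); rewrite normrN; lra.
      set qv := lc (P :\ x) (fun=>1) + lam *: lc tau (fun=>1).
      have dPxt : [disjoint P :\ x & tau].
        by apply: disjP => z /setD1P [_ zP] zt; rewrite (disjointFr dPt zP) in zt.
      pose g := fun i => if i \in P :\ x then 1 else lam.
      have q1 : qv = lc ((P :\ x) :|: tau) g.
        rewrite /qv lcU // lcZ (@lc_ext (P :\ x) g (fun=>1)); last by move=> i hi; rewrite /g hi.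
        rewrite (@lc_ext tau g (fun=> lam * 1)) // => i hi.
        by rewrite /g (disjointFl dPxt hi) mulr1.
      pose g' := fun i => if i == y then 1 else if i == x then h x else lam + h i.
      have q2 : qv = lc A g'.
        rewrite /qv R /A lcU1 ?inE ?negb_or ?yx ?yt // lcU1 // /g' eqxx scale1r xy eqxx.
        have -> : lc tau (fun i => if i == y then 1 else if i == x then h x else lam + h i)
            = lam *: lc tau (fun=>1) + lc tau h.
          rewrite lcZ lcD; apply: lc_ext => i it; by rewrite ytau // xtau // mulr1.
        by rewrite !addrA [LHS]addrAC.
      have c1 : in_cone ray ((P :\ x) :|: tau) qv.
        exists g; split; last by rewrite q1.
        by move=> i _; rewrite /g; case: ifP => _ //; exact: ler01.
      have c2 : in_cone ray A qv.
        exists g'; split; last by rewrite q2.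
        move=> i iA; rewrite /g'; case: (eqVneq i y) => [_|iy]; first exact: ler01.
        case: (eqVneq i x) => [_|ix]; first exact: hx0.
        by apply: lamz; move: iA; rewrite /A !inE (negbTE iy) (negbTE ix).
      have [d [d0 ed]] := Dinter (hPx x xP) yD c1 c2.
      have [x' x'Px x'y] : exists2 x', x' \in P :\ x & x' != y.
        case: (boolP (y \in P :\ x)) => yP.
          have : (0 < #|(P :\ x) :\ y|)%N by have := cardsD1 y (P :\ x); rewrite yP cPx add1n => -[<-].
          by rewrite card_gt0 => /set0Pn [x' /setD1P [x'y x'P]]; exists x'.
        have : (0 < #|P :\ x|)%N by rewrite cPx.
        rewrite card_gt0 => /set0Pn [x' x'P]; exists x' => //.
        by apply: contraNneq yP => <-.
      move: (x'Px) => /setD1P [x'x x'P].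
      have e : lc (P :|: tau) (fun i => if i \in (P :\ x) :|: tau then g i else 0) =
               lc (P :|: tau) (fun i => if i \in ((P :\ x) :|: tau) :&: A then d i else 0).
        have s1 : (P :\ x) :|: tau \subset P :|: tau by apply: setSU; exact: subD1set.
        have s2 : ((P :\ x) :|: tau) :&: A \subset P :|: tau.
          exact: subset_trans (subsetIl _ _) s1.
        by rewrite -(lc_sub _ s1) -(lc_sub _ s2) -q1 ed.
      have := indep_eq iPt e (i := x'); rewrite inE x'P => /(_ isT).
      rewrite inE x'Px /g x'Px /A !inE (negbTE x'y) (negbTE x'x) (disjointFr dPt x'P).
      by rewrite andbF => /eqP; rewrite oner_eq0.
    case: (eqVneq kx (-1)) => [kx1 | kxn1].
      left; exists y; split => //.
        apply: Dsub yD _; apply/subsetP => z; rewrite !inE => /orP[->|->] //.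
        by rewrite !orbT.
      exists h; rewrite (lcD1 _ xP) R hkx kx1 scale1r.
      have -> : ((-1 : int)%:~R : rat) = -1 by [].
      rewrite scaleN1r.
      by rewrite grp.
    right.
    have hxle : kx <= -2 by move: neg kxn1; clear; lia.
    have py : pair ray m y <= 1.
      apply: (mle1 m1 mlt) => //; apply: Dsub yD _; apply/subsetP => z.
      by rewrite /A !inE => /orP[->|->] //; rewrite !orbT.
    have e : pv m (lc P (fun=>1)) = pair ray m y + (h x + 1) * pair ray m x.
      rewrite (lcD1 _ xP) R !pvD !pvZ !pv_rq pv_lc big1 => [|z zt]; last by rewrite m0 // mulr0.
      rewrite addr0; ring.
    rewrite e in pv1.
    have hneg : h x + 1 < 0.
      have hh : (kx%:~R : rat) <= (-2 : int)%:~R by rewrite ler_int.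
      have e2 : ((-2 : int)%:~R : rat) = -2 by [].
      rewrite e2 -hkx in hh; lra.
    rewrite leNgt; apply/negP => px0.
    have : (h x + 1) * pair ray m x < 0 by rewrite nmulr_rlt0.
    lra.
  apply: NNPP => hno.
  have allle : forall x, x \in P -> pair ray m x <= 0.
    by move=> x xP; case: (hx x xP) => // h'; case: hno.
  have : \sum_(x in P) pair ray m x <= 0 by apply: sumr_le0.
  rewrite -pvP; lra.
Qed.

Lemma lca_map T (a : I -> int) :
  lc T (fun i => (a i)%:~R) = map_mx intr (\sum_(i in T) a i *: ray i).
Proof.
rewrite /lc (map_mx_sum (GRing.Additive.clone _ _ intr _)).
apply: eq_bigr => i _; apply/matrixP => p q; rewrite !mxE.
by rewrite -intrM.
Qed.

Lemma Dset0 (i : I) : set0 \in D.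
Proof. by apply: (Dsub (Dsing i)); exact: sub0set. Qed.

Lemma mainS T (a : I -> int) (i1 : I) : T \in D -> (forall i, i \in T -> 1 <= a i) ->
  i1 \in T -> 2 <= a i1 ->
  forall k S, (#|S| <= k)%N -> lin_indep ray S ->
  lc S (fun=>1) <> lc T (fun i => (a i)%:~R).
Proof.
move=> hT ha hi1 ha1.
have caseD : forall S, S \in D -> lin_indep ray S ->
    lc S (fun=>1) <> lc T (fun i => (a i)%:~R).
  move=> S SD iS e.
  have c1 : in_cone ray S (lc T (fun i => (a i)%:~R)).
    by exists (fun=> 1); split; [move=> *; exact: ler01 | rewrite -e].
  have c2 : in_cone ray T (lc T (fun i => (a i)%:~R)).
    exists (fun i => (a i)%:~R); split => // i iT.
    by rewrite ler0z; apply: le_trans (ha i iT).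
  have [d [d0 ed]] := Dinter SD hT c1 c2.
  have e1 : lc T (fun i => (a i)%:~R) = lc T (fun i => if i \in S :&: T then d i else 0).
    by rewrite -lc_sub ?subsetIr //; exact: ed.
  have := indep_eq (indepD hT) e1 hi1.
  case: ifP => [/setIP [i1S _] | _] hd; last first.
    move: hd => /eqP; rewrite intr_eq0 => /eqP h0.
    by move: ha1; rewrite h0.
  have e2 : lc S (fun=>1) = lc S (fun i => if i \in S :&: T then d i else 0).
    by rewrite -lc_sub ?subsetIl // e; exact: ed.
  have := indep_eq iS e2 i1S; rewrite inE i1S hi1 /= => hd1.
  have : ((a i1)%:~R : rat) = (1 : int)%:~R by rewrite hd -hd1.
  move/eqP; rewrite eqr_int => /eqP h1.
  by move: ha1; rewrite h1.
elim=> [|k IH] S cS iS e.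
  have S0 : S = set0 by apply/eqP; rewrite -cards_eq0 -leqn0.
  by apply: (caseD S) => //; rewrite S0 (Dset0 i1).
case: (boolP (S \in D)) => [SD | nSD]; first exact: (caseD S).
have PS0 : (S \subset S) && (S \notin D) by rewrite subxx nSD.
case: (@arg_minnP _ S (fun P : {set I} => (P \subset S) && (P \notin D)) (fun P => #|P|) PS0)
  => P /andP[PS nPD] Pmin.
have hPx : forall x, x \in P -> (P :\ x) :|: set0 \in D.
  move=> x xP; rewrite setU0; apply/negPn/negP => nD.
  have := Pmin (P :\ x); rewrite (subset_trans (subD1set P x) PS) nD => /(_ isT).
  by rewrite (cardsD1 x P) xP add1n ltnn.
have cP1 : (1 < #|P|)%N.
  rewrite ltnNge; apply/negP => hle.
  have : (#|P| == 0)%N || (#|P| == 1)%N by case: #|P| hle => [|[|]].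
  case/orP => [/eqP/cards0_eq P0 | /cards1P [x Px]].
    by move: nPD; rewrite P0 (Dset0 i1).
  by move: nPD; rewrite Px Dsing.
have [k' cP] : exists k', #|P| = k'.+2.
  by exists (#|P| - 2)%N; move: cP1; generalize #|P|; clear; lia.
have iP : lin_indep ray (P :|: set0) by rewrite setU0; exact: indep_sub iS PS.
have dP : [disjoint P & set0] by apply: disjP => z _; rewrite inE.
have nP : P :|: set0 \notin D by rewrite setU0.
have [y [_ _ [h eh]]] := G cP (Dset0 i1) dP iP nP hPx.
rewrite lc_set0 in eh; move/subr0_eq: eh => eh.
have P0 : P != set0 by rewrite -card_gt0; apply: ltn_trans cP1.
have ySP : y \notin S :\: P.
  apply/negP => /setDP [yS yP].
  have e' : lc S (fun i => if i \in P then 1 else 0) =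
            lc S (fun i => if i \in [set y] then 1 else 0).
    rewrite -!lc_sub ?sub1set // eh /lc big_set1 scale1r //.
  have := indep_eq iS e' yS; rewrite (negbTE yP) inE eqxx => /eqP.
  by rewrite eq_sym oner_eq0.
set S' := y |: (S :\: P).
apply: (IH S').
- rewrite /S' cardsU1 ySP cardsD (setIidPr PS).
  have cPS := subset_leq_card PS.
  move: cS cP1 cPS; generalize #|S| #|P|; clear; lia.
- move=> c hc i iS'.
  have ec : lc S (fun i => if i \in P then c y else c i) = 0.
    rewrite (lc_split _ PS).
    have -> : lc P (fun i => if i \in P then c y else c i) = c y *: rq y.
      by rewrite -eh lcZ; apply: lc_ext => j jP; rewrite jP mulr1.
    have -> : lc (S :\: P) (fun i => if i \in P then c y else c i) = lc (S :\: P) c.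
      by apply: lc_ext => j /setDP [_ /negbTE ->].
    by rewrite -lcU1 //; exact: hc.
  have g0 := iS _ ec.
  move: iS'; rewrite /S' !inE => /orP[/eqP -> | /andP [iP' iSS]].
    have [x0 x0P] := set0Pn _ P0.
    by have := g0 x0 (subsetP PS x0 x0P); rewrite x0P.
  by have := g0 i iSS; rewrite (negbTE iP').
- rewrite -e /S' lcU1 // scale1r -eh (lc_split _ PS).
  by [].
Qed.

End Fan.

Theorem lemma3p4 (n : nat) (I : finType) (ray : I -> 'rV[int]_n)
    (D : {set {set I}})
    (hfan : complete_smooth_fan ray D)
    (hfano : fano ray D)
    (hsub : all_toric_subvarieties_fano ray D)
    (T : {set I}) (hT : T \in D)
    (a : I -> int) (ha : forall i, i \in T -> 1 <= a i)
    (i1 : I) (hi1 : i1 \in T) (ha1 : 2 <= a i1)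
    (S : {set I}) (hS : lin_indep ray S) :
  \sum_(i in S) ray i != \sum_(i in T) a i *: ray i.
Proof.
apply/negP => /eqP E.
apply: (mainS hfan hsub hT ha hi1 ha1 (leqnn #|S|) hS).
by rewrite lc1_map E lca_map.
Qed.
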